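(* Let $l\ge 3$, $\mathfrak g=\mathfrak{sl}_{l+1}(\mathbb C)$, $v'_{l,1}=e_{\epsilon_1-\epsilon_{l+1}}e_{\epsilon_2-\epsilon_l}-e_{\epsilon_2-\epsilon_{l+1}}e_{\epsilon_1-\epsilon_l}\in U(\mathfrak g)$, $R$ the adjoint $\mathfrak g$-submodule of $U(\mathfrak g)$ generated by $v'_{l,1}$, $R_0$ its zero-weight subspace, and $\mathcal P_0=\{p_r : r\in R_0\}$. Define polynomials in $h_1,\dots,h_l$: (1) $p_{ij}(h)=h_ih_j$ for $i=1,\dots,l-2$ and $j$ with $j-i\ge 2$ (and $j\le l$); (2) $q_i(h)=h_i(h_{i-1}+h_i+h_{i+1}+1)$ for $i=2,\dots,l-1$. Then all $p_{ij}$ and $q_i$ belong to $\mathcal P_0$.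
   Context: $\mathfrak g=\mathfrak{sl}_{l+1}(\mathbb C)$ with Cartan subalgebra $\mathfrak h$ of traceless diagonal matrices, triangular decomposition $\mathfrak g=\mathfrak n_-\oplus\mathfrak h\oplus\mathfrak n_+$ ($\mathfrak n_+$ strictly upper triangular), simple roots $\alpha_i=\epsilon_i-\epsilon_{i+1}$. For $i<j$: $e_{\epsilon_i-\epsilon_j}=(-1)^{j-i-1}E_{ij}$, $f_{\epsilon_i-\epsilon_j}=(-1)^{j-i-1}E_{ji}$, $h_{\epsilon_i-\epsilon_j}=E_{ii}-E_{jj}$, $h_i=h_{\alpha_i}$. The adjoint action is $X_L f=[X,f]$. For $r\in R_0$, $p_r$ denotes the unique element of $S(\mathfrak h)=\mathbb C[h_1,\dots,h_l]$ with $r-p_r\in U(\mathfrak g)\mathfrak n_+$; equivalently $r v_\mu=p_r(\mu)v_\mu$ for every highest weight vector $v_\mu$ of weight $\mu\in\mathfrak h^*$ (polynomials are evaluated at $\mu$ via $h_i\mapsto\mu(h_i)$). *)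

(* Defs.v *)
(* U(sl_{l+1}(C)) presented by generators and relations;
   C is modelled as R[i] for R : realType (complete archimedean field = reals). *)
From HB Require Import structures.
From mathcomp Require Import all_boot all_order all_algebra.
From mathcomp Require Import complex.
From mathcomp Require Import reals.

Set Implicit Arguments.
Unset Strict Implicit.
Unset Printing Implicit Defensive.
Import Order.TTheory GRing.Theory Num.Theory.
Local Open Scope ring_scope.

Section UEnv.
Variables (R : realType) (l : nat).

(* n = l + 1; indices of matrices are 0-based: paper's index k is inord (k-1). *)
Local Notation C := R[i].
Local Notation n := l.+1.

Definition sl := {X : 'M[C]_n | \tr X == 0}.

Lemma tr_zero_mx : \tr (0 : 'M[C]_n) == 0.
Proof. by rewrite mxtrace0. Qed.

Definition sl0 : sl := exist _ 0 tr_zero_mx.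

Definition lbr (X Y : 'M[C]_n) : 'M[C]_n := X *m Y - Y *m X.

Definition in_cartan (X : sl) : Prop := forall i j : 'I_n, i != j -> val X i j = 0.
Definition in_nplus (X : sl) : Prop := forall i j : 'I_n, (j <= i)%N -> val X i j = 0.

(* Terms of the tensor algebra T(g) over C *)
Inductive uterm : Type :=
| Ugen of sl
| Uscal of C
| Uadd of uterm & uterm
| Umul of uterm & uterm.

Definition Uopp (u : uterm) := Umul (Uscal (-1)) u.
Definition Usub (u v : uterm) := Uadd u (Uopp v).

(* equality in U(g) = T(g) / (X Y - Y X - [X,Y]) : the congruence generated by
   the axioms of an associative unital C-algebra, linearity of the generator
   map g -> U(g), and the commutator relations. *)
Inductive ueq : uterm -> uterm -> Prop :=
| ueq_refl u : ueq u u
| ueq_sym u v : ueq u v -> ueq v u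
| ueq_trans u v w : ueq u v -> ueq v w -> ueq u w
| ueq_add u u' v v' : ueq u u' -> ueq v v' -> ueq (Uadd u v) (Uadd u' v')
| ueq_mul u u' v v' : ueq u u' -> ueq v v' -> ueq (Umul u v) (Umul u' v')
| ueq_addA u v w : ueq (Uadd u (Uadd v w)) (Uadd (Uadd u v) w)
| ueq_addC u v : ueq (Uadd u v) (Uadd v u)
| ueq_add0 u : ueq (Uadd u (Uscal 0)) u
| ueq_addN u : ueq (Uadd u (Uopp u)) (Uscal 0)
| ueq_mulA u v w : ueq (Umul u (Umul v w)) (Umul (Umul u v) w)
| ueq_mul1l u : ueq (Umul (Uscal 1) u) u
| ueq_mul1r u : ueq (Umul u (Uscal 1)) u
| ueq_mulDl u v w : ueq (Umul (Uadd u v) w) (Uadd (Umul u w) (Umul v w))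
| ueq_mulDr u v w : ueq (Umul u (Uadd v w)) (Uadd (Umul u v) (Umul u w))
| ueq_scalD a b : ueq (Uadd (Uscal a) (Uscal b)) (Uscal (a + b))
| ueq_scalM a b : ueq (Umul (Uscal a) (Uscal b)) (Uscal (a * b))
| ueq_scalC a u : ueq (Umul (Uscal a) u) (Umul u (Uscal a))
| ueq_genL a b (X Y Z : sl) : val Z = a *: val X + b *: val Y ->
    ueq (Ugen Z) (Uadd (Umul (Uscal a) (Ugen X)) (Umul (Uscal b) (Ugen Y)))
| ueq_genBr (X Y Z : sl) : val Z = lbr (val X) (val Y) ->
    ueq (Usub (Umul (Ugen X) (Ugen Y)) (Umul (Ugen Y) (Ugen X))) (Ugen Z).

Definition uad (X : sl) (u : uterm) : uterm := Usub (Umul (Ugen X) u) (Umul u (Ugen X)).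

Inductive in_adj_submod (v : uterm) : uterm -> Prop :=
| sm_gen : in_adj_submod v v
| sm_add u w : in_adj_submod v u -> in_adj_submod v w -> in_adj_submod v (Uadd u w)
| sm_scale c u : in_adj_submod v u -> in_adj_submod v (Umul (Uscal c) u)
| sm_ad X u : in_adj_submod v u -> in_adj_submod v (uad X u)
| sm_eq u w : in_adj_submod v u -> ueq u w -> in_adj_submod v w.

Definition zero_weight (u : uterm) : Prop :=
  forall H : sl, in_cartan H -> ueq (uad H u) (Uscal 0).

Inductive in_Unplus : uterm -> Prop :=
| un_mul u (X : sl) : in_nplus X -> in_Unplus (Umul u (Ugen X))
| un_add u w : in_Unplus u -> in_Unplus w -> in_Unplus (Uadd u w)
| un_eq u w : in_Unplus u -> ueq u w -> in_Unplus w.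

(* matrix units with the paper's 1-based indices *)
Definition Emx (i j : nat) : 'M[C]_n := delta_mx (inord i.-1) (inord j.-1).

Definition e_root (i j : nat) : sl := insubd sl0 ((-1) ^+ (j - i - 1) *: Emx i j).
Definition h_cartan (i : nat) : sl := insubd sl0 (Emx i i - Emx i.+1 i.+1).

Definition ue (i j : nat) : uterm := Ugen (e_root i j).
Definition uh (i : nat) : uterm := Ugen (h_cartan i).

Definition v_l1 : uterm :=
  Usub (Umul (ue 1 l.+1) (ue 2 l)) (Umul (ue 2 l.+1) (ue 1 l)).

(* p is in P_0 (p an element of S(h) = C[h_1..h_l] viewed inside U(g)):
   there is r in R_0 with p_r = p, i.e. r - p in U(g) n_+ *)
Definition in_P0 (p : uterm) : Prop :=
  exists r, [/\ in_adj_submod v_l1 r, zero_weight r & in_Unplus (Usub r p)].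

Definition p_ij (i j : nat) : uterm := Umul (uh i) (uh j).
Definition q_i (i : nat) : uterm :=
  Umul (uh i) (Uadd (Uadd (Uadd (uh i.-1) (uh i)) (uh i.+1)) (Uscal 1)).

End UEnv.

(* Main.v *)
From HB Require Import structures.
Require Import Defs.
From mathcomp Require Import all_boot all_order all_algebra.
From mathcomp Require Import complex reals.
From mathcomp Require Import boolp ring zify.
Set Implicit Arguments.
Unset Strict Implicit.
Unset Printing Implicit Defensive.
Import Order.TTheory GRing.Theory Num.Theory.
Local Open Scope ring_scope.

Section Quot.
Variables (R : realType) (l : nat).
Local Notation C := R[i].
Local Notation n := l.+1.
Local Notation U := (uterm R l).

Lemma ueq_sym' (u v : U) : ueq u v -> ueq v u. Proof. exact: ueq_sym. Qed.

Lemma ueq_ext (u v : U) : ueq u v -> ueq u = ueq v.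
Proof.
move=> h; apply: funext => w; apply: propext; split => h'.
  exact: ueq_trans (ueq_sym h) h'.
exact: ueq_trans h h'.
Qed.

Definition Q := {P : U -> Prop | exists u, P = ueq u}.
Definition cls (u : U) : Q := exist _ (ueq u) (ex_intro _ u erefl).
Definition rep (q : Q) : U := sval (cid (svalP q)).

Lemma clsP (u v : U) : cls u = cls v <-> ueq u v.
Proof.
split.
  move=> /(congr1 sval) /= e; rewrite e; exact: ueq_refl.
move=> h; rewrite /cls.
move: (ex_intro _ u _) (ex_intro _ v _).
rewrite (ueq_ext h) => p1 p2; by rewrite (Prop_irrelevance p1 p2).
Qed.

Lemma repK (q : Q) : cls (rep q) = q.
Proof.
rewrite /rep; case: (cid (svalP q)) => u /= hu.
case: q hu => P hP /= hu; rewrite /cls.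
move: (ex_intro _ u _) hP; rewrite -hu => p1 p2; by rewrite (Prop_irrelevance p1 p2).
Qed.

Lemma Qind (P : Q -> Prop) : (forall u, P (cls u)) -> forall q, P q.
Proof. by move=> h q; rewrite -(repK q). Qed.

Lemma rep_cls (u : U) : ueq (rep (cls u)) u.
Proof. by apply/clsP; rewrite repK. Qed.

Definition addQ (p q : Q) := cls (Uadd (rep p) (rep q)).
Definition mulQ (p q : Q) := cls (Umul (rep p) (rep q)).
Definition oppQ (p : Q) := cls (Uopp (rep p)).
Definition zeroQ := cls (Uscal l 0).
Definition oneQ := cls (Uscal l 1).

Lemma addQE u v : addQ (cls u) (cls v) = cls (Uadd u v).
Proof. by apply/clsP; apply: ueq_add; apply: rep_cls. Qed.
Lemma mulQE u v : mulQ (cls u) (cls v) = cls (Umul u v).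
Proof. by apply/clsP; apply: ueq_mul; apply: rep_cls. Qed.
Lemma oppQE u : oppQ (cls u) = cls (Uopp u).
Proof. by apply/clsP; apply: ueq_mul; [apply: ueq_refl|apply: rep_cls]. Qed.

Lemma addQA : associative addQ.
Proof.
elim/Qind=> u; elim/Qind=> v; elim/Qind=> w.
rewrite !addQE; apply/clsP; exact: ueq_addA.
Qed.
Lemma addQC : commutative addQ.
Proof. elim/Qind=> u; elim/Qind=> v; rewrite !addQE; apply/clsP; exact: ueq_addC. Qed.
Lemma add0Q : left_id zeroQ addQ.
Proof.
elim/Qind=> u; rewrite addQE; apply/clsP.
exact: ueq_trans (ueq_addC _ _) (ueq_add0 _).
Qed.
Lemma addNQ : left_inverse zeroQ oppQ addQ.
Proof.
elim/Qind=> u; rewrite oppQE addQE; apply/clsP.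
exact: ueq_trans (ueq_addC _ _) (ueq_addN _).
Qed.

HB.instance Definition _ := gen_eqMixin Q.
HB.instance Definition _ := gen_choiceMixin Q.
HB.instance Definition _ := GRing.isZmodule.Build Q addQA addQC add0Q addNQ.

Lemma mulQA : associative mulQ.
Proof.
elim/Qind=> u; elim/Qind=> v; elim/Qind=> w.
rewrite !mulQE; apply/clsP; exact: ueq_mulA.
Qed.
Lemma mul1Q : left_id oneQ mulQ.
Proof. elim/Qind=> u; rewrite mulQE; apply/clsP; exact: ueq_mul1l. Qed.
Lemma mulQ1 : right_id oneQ mulQ.
Proof. elim/Qind=> u; rewrite mulQE; apply/clsP; exact: ueq_mul1r. Qed.
Lemma mulQDl : left_distributive mulQ addQ.
Proof.
elim/Qind=> u; elim/Qind=> v; elim/Qind=> w.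
rewrite !(addQE, mulQE); apply/clsP; exact: ueq_mulDl.
Qed.
Lemma mulQDr : right_distributive mulQ addQ.
Proof.
elim/Qind=> u; elim/Qind=> v; elim/Qind=> w.
rewrite !(addQE, mulQE); apply/clsP; exact: ueq_mulDr.
Qed.

(* a scalar model to show 1 != 0 *)
Fixpoint ev (u : U) : C :=
  match u with
  | Ugen _ => 0
  | Uscal c => c
  | Uadd a b => ev a + ev b
  | Umul a b => ev a * ev b
  end.

Lemma ev_ueq (u v : U) : ueq u v -> ev u = ev v.
Proof.
elim=> //=.
- by move=> ? ? ? _ -> _ ->.
- by move=> ? ? ? ? _ -> _ ->.
- by move=> ? ? ? ? _ -> _ ->.
all: by move=> *; ring.
Qed.

Lemma oneQ_neq0 : oneQ != zeroQ.
Proof.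
apply/eqP => /clsP /ev_ueq /= /eqP; by rewrite oner_eq0.
Qed.

HB.instance Definition _ := GRing.Zmodule_isNzRing.Build Q mulQA mul1Q mulQ1 mulQDl mulQDr oneQ_neq0.

Lemma clsD u v : cls (Uadd u v) = cls u + cls v. Proof. by rewrite -addQE. Qed.
Lemma clsM u v : cls (Umul u v) = cls u * cls v. Proof. by rewrite -mulQE. Qed.
Lemma clsN u : cls (Uopp u) = - cls u. Proof. by rewrite -oppQE. Qed.
Lemma clsB u v : cls (Usub u v) = cls u - cls v. Proof. by rewrite /Usub clsD clsN. Qed.
Lemma cls0 : cls (Uscal l 0) = 0. Proof. by []. Qed.
Lemma cls1 : cls (Uscal l 1) = 1. Proof. by []. Qed.

End Quot.

Lemma telesc (V : zmodType) (a b c : V) : (a - b) + (b - c) = a - c.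
Proof. by rewrite addrA subrK. Qed.

Section Gen.
Variables (R : realType) (l : nat).
Local Notation C := R[i].
Local Notation n := l.+1.
Local Notation U := (uterm R l).
Local Notation Q := (Q R l).

Definition sc (c : C) : Q := cls (Uscal l c).

Lemma scC c (q : Q) : sc c * q = q * sc c.
Proof. elim/Qind: q => u; rewrite -!clsM; apply/clsP; exact: ueq_scalC. Qed.
Lemma scD a b : sc (a + b) = sc a + sc b.
Proof. rewrite /sc -clsD; apply/clsP/ueq_sym; exact: ueq_scalD. Qed.
Lemma scM a b : sc (a * b) = sc a * sc b.
Proof. rewrite /sc -clsM; apply/clsP/ueq_sym; exact: ueq_scalM. Qed.
Lemma sc0 : sc 0 = 0. Proof. by []. Qed.
Lemma sc1 : sc 1 = 1. Proof. by []. Qed.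
Lemma scN1 (q : Q) : sc (-1) * q = - q.
Proof. elim/Qind: q => u; by rewrite -clsN /Uopp clsM. Qed.

Lemma n_neq0 : (n%:R : C) != 0.
Proof. by rewrite pnatr_eq0. Qed.

Definition prj (M : 'M[C]_n) : 'M[C]_n := M - (\tr M / n%:R)%:M.
Lemma prj_tr M : \tr (prj M) == 0.
Proof.
rewrite /prj raddfB /= mxtrace_scalar -(mulr_natr (\tr M / n%:R)) divfK ?subrr //.
exact: n_neq0.
Qed.
Definition slp (M : 'M[C]_n) : sl R l := insubd (sl0 R l) (prj M).
Lemma slpE M : val (slp M) = prj M.
Proof. by rewrite /slp insubdK //; apply: prj_tr. Qed.
Lemma prj_tr0 M : \tr M = 0 -> prj M = M.
Proof. by move=> h; rewrite /prj h mul0r raddf0 subr0. Qed.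

Definition g_def (M : 'M[C]_n) : Q := cls (Ugen (slp M)).
Fact g_key : unit. Proof. by []. Qed.
Definition g := locked_with g_key g_def.
Lemma gE M : g M = cls (Ugen (slp M)). Proof. by rewrite /g unlock. Qed.

Lemma gD M N : g (M + N) = g M + g N.
Proof.
rewrite !gE -clsD; apply/clsP.
apply: ueq_trans (ueq_genL (a := 1) (b := 1) (X := slp M) (Y := slp N) _) _.
  rewrite !slpE !scale1r /prj mxtraceD mulrDl raddfD /=.
  by rewrite opprD addrACA.
apply: ueq_add; exact: ueq_mul1l.
Qed.

Lemma gZ c M : g (c *: M) = sc c * g M.
Proof.
rewrite !gE /sc -clsM; apply/clsP.
apply: ueq_trans (ueq_genL (a := c) (b := 0) (X := slp M) (Y := slp M) _) _.
  by rewrite !slpE scale0r addr0 /prj mxtraceZ scalerBr scale_scalar_mx mulrA.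
apply/clsP; rewrite clsD !clsM cls0 mul0r addr0; done.
Qed.

Lemma g0 : g 0 = 0.
Proof. by rewrite -(scale0r (0 : 'M[C]_n)) gZ sc0 mul0r. Qed.
Lemma gN M : g (- M) = - g M.
Proof. by rewrite -scaleN1r gZ scN1. Qed.
Lemma gB M N : g (M - N) = g M - g N.
Proof. by rewrite gD gN. Qed.

Lemma lbr_scal (M N : 'M[C]_n) a b : lbr (M - a%:M) (N - b%:M) = lbr M N.
Proof.
rewrite /lbr !mulmxBl !mulmxBr (scalar_mxC b M) (scalar_mxC a N) (scalar_mxC b a%:M).
rewrite !opprB.
by rewrite addrACA !telesc.
Qed.

Lemma gbr M N : g M * g N - g N * g M = g (M *m N - N *m M).
Proof.
rewrite !gE -clsM -clsM -clsB; apply/clsP; apply: ueq_genBr.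
rewrite !slpE (@prj_tr0 (M *m N - N *m M)); last first.
  by rewrite raddfB /= mxtrace_mulC subrr.
by rewrite /prj lbr_scal.
Qed.


Definition ad_def (x y : Q) := x * y - y * x.
Fact ad_key : unit. Proof. by []. Qed.
Definition ad := locked_with ad_key ad_def.
Lemma adE x y : ad x y = x * y - y * x. Proof. by rewrite /ad unlock. Qed.

Lemma adM x y z : ad x (y * z) = ad x y * z + y * ad x z.
Proof. by rewrite !adE mulrBl mulrBr !mulrA telesc. Qed.
Lemma adD x y z : ad x (y + z) = ad x y + ad x z.
Proof. by rewrite !adE mulrDr mulrDl opprD addrACA. Qed.
Lemma adN x y : ad x (- y) = - ad x y.
Proof. by rewrite !adE mulrN mulNr opprB opprK addrC. Qed.
Lemma adB x y z : ad x (y - z) = ad x y - ad x z.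
Proof. by rewrite adD adN. Qed.
Lemma ad0 x : ad x 0 = 0.
Proof. by rewrite !adE mulr0 mul0r subrr. Qed.
Lemma adZ x c y : ad x (sc c * y) = sc c * ad x y.
Proof. by rewrite !adE mulrBr !mulrA (scC c x). Qed.
Lemma adZl x c y : ad (sc c * x) y = sc c * ad x y.
Proof. by rewrite !adE mulrBr !mulrA -(scC c y). Qed.
Lemma jacobi h x y : ad h (ad x y) = ad (ad h x) y + ad x (ad h y).
Proof.
have -> : ad x y = x * y - y * x by rewrite adE.
rewrite adB !adM.
set A := ad h x; set B := ad h y; rewrite !adE.
by rewrite opprD (addrC (- (B * x))) addrACA.
Qed.

Lemma wt_ad h x y a b : ad h x = sc a * x -> ad h y = sc b * y ->
  ad h (ad x y) = sc (a + b) * ad x y.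
Proof. by move=> hx hy; rewrite jacobi hx hy adZl adZ scD mulrDl. Qed.
Lemma wt_mul h x y a b : ad h x = sc a * x -> ad h y = sc b * y ->
  ad h (x * y) = sc (a + b) * (x * y).
Proof.
by move=> hx hy; rewrite adM hx hy scD mulrDl !mulrA (scC b x).
Qed.
Lemma wt_sub h x y a : ad h x = sc a * x -> ad h y = sc a * y ->
  ad h (x - y) = sc a * (x - y).
Proof. by move=> hx hy; rewrite adB hx hy mulrBr. Qed.
Lemma wt_eq h x a b : a = b -> ad h x = sc a * x -> ad h x = sc b * x.
Proof. by move=> ->. Qed.

Notation Eg a b := (g (delta_mx a b)).

Lemma br (a b c d : 'I_n) :
  ad (Eg a b) (Eg c d) = g (delta_mx a d *+ (b == c) - delta_mx c b *+ (d == a)).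
Proof. by rewrite !adE gbr !mul_delta_mx_cond. Qed.

Lemma cls_gen (H : sl R l) : cls (Ugen H) = g (val H).
Proof.
rewrite gE; congr (cls (Ugen _)); apply: val_inj.
by rewrite slpE prj_tr0 //; apply/eqP; exact: (valP H).
Qed.

Lemma diag_mul (H : 'M[C]_n) (a b : 'I_n) : (forall i j : 'I_n, i != j -> H i j = 0) ->
  H *m delta_mx a b = H a a *: delta_mx a b /\ delta_mx a b *m H = H b b *: delta_mx a b.
Proof.
move=> hH; split; apply/matrixP => i j; rewrite !mxE.
  rewrite (bigD1 a) //= big1 ?addr0; last first.
    by move=> k /negbTE hk; rewrite mxE hk mulr0.
  rewrite mxE eqxx /=; case: (eqVneq i a) => [->|hia] //=.
  by rewrite hH // !mul0r mulr0.
rewrite (bigD1 b) //= big1 ?addr0; last first.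
  by move=> k /negbTE hk; rewrite mxE hk andbF mul0r.
rewrite mxE eqxx andbT; case: (eqVneq j b) => [->|hjb]; first by rewrite mulrC andbT.
by rewrite (hH b j) 1?eq_sym // mulr0 andbF /= mulr0n mulr0.
Qed.

Lemma wtE (H : sl R l) (a b : 'I_n) : in_cartan H ->
  ad (cls (Ugen H)) (Eg a b) = sc (val H a a - val H b b) * Eg a b.
Proof.
move=> hH; rewrite cls_gen adE gbr.
have [-> ->] := diag_mul a b hH.
by rewrite -scalerBl gZ.
Qed.

Definition Rq (q : Q) := exists u, in_adj_submod (v_l1 R l) u /\ cls u = q.

Lemma Rq_ad M q : Rq q -> Rq (ad (g M) q).
Proof.
case=> u [hu <-]; exists (uad (slp M) u); split; first exact: sm_ad.
by rewrite /uad clsB !clsM adE gE.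
Qed.
Lemma Rq_sc c q : Rq q -> Rq (sc c * q).
Proof. case=> u [hu <-]; exists (Umul (Uscal l c) u); split; [exact: sm_scale|by rewrite clsM]. Qed.
Lemma Rq_add p q : Rq p -> Rq q -> Rq (p + q).
Proof.
case=> u [hu <-] [w [hw <-]]; exists (Uadd u w); split; [exact: sm_add|by rewrite clsD].
Qed.
Lemma Rq_opp q : Rq q -> Rq (- q).
Proof. by move=> h; rewrite -scN1; apply: Rq_sc. Qed.
Lemma Rq_sub p q : Rq p -> Rq q -> Rq (p - q).
Proof. by move=> hp hq; apply: Rq_add => //; apply: Rq_opp. Qed.
Lemma Rq_v : Rq (cls (v_l1 R l)).
Proof. by exists (v_l1 R l); split => //; apply: sm_gen. Qed.

Definition Iq (q : Q) := exists u, in_Unplus u /\ cls u = q.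

Lemma Iq_add p q : Iq p -> Iq q -> Iq (p + q).
Proof.
case=> u [hu <-] [w [hw <-]]; exists (Uadd u w); split; [exact: un_add|by rewrite clsD].
Qed.
Lemma Iq_mull x q : Iq q -> Iq (x * q).
Proof.
elim/Qind: x => x [u [hu <-]]; exists (Umul x u); split; last by rewrite clsM.
elim: hu.
- move=> w X hX; apply: un_eq (ueq_sym (ueq_mulA _ _ _)); exact: un_mul.
- move=> a b _ ha _ hb; apply: un_eq (ueq_sym (ueq_mulDr _ _ _)); exact: un_add.
- move=> a b _ ha hab; apply: un_eq ha _; apply: ueq_mul => //; exact: ueq_refl.
Qed.
Lemma Iq_opp q : Iq q -> Iq (- q).
Proof. by move=> h; rewrite -scN1; apply: Iq_mull. Qed.
Lemma Iq_sub p q : Iq p -> Iq q -> Iq (p - q).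
Proof. by move=> hp hq; apply: Iq_add => //; apply: Iq_opp. Qed.
Lemma Iq_E x (a b : 'I_n) : (a < b)%N -> Iq (x * Eg a b).
Proof.
move=> hab; apply: Iq_mull.
exists (Umul (Uscal l 1) (Ugen (slp (delta_mx a b)))); split; last by rewrite clsM mul1r gE.
apply: un_mul => i j hji; rewrite slpE prj_tr0; last first.
  rewrite /mxtrace (bigD1 a) //= big1 ?mxE ?eqxx /=.
    have /negbTE -> : a != b by apply/eqP => e; move: hab; rewrite e ltnn.
    by rewrite addr0.
  by move=> k /negbTE hk; rewrite mxE hk.
rewrite mxE; case: (eqVneq i a) => [ei|_] //.
case: (eqVneq j b) => [ej|_] //.
by move: hji; rewrite ei ej leqNgt hab.
Qed.

End Gen.

Lemma brD (R : realType) (l : nat) (p q x y : 'I_l.+1) :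
  ad (@g R l (delta_mx p q)) (@g R l (delta_mx x x - delta_mx y y)) =
  @g R l (delta_mx p x *+ (q == x) - delta_mx x q *+ (x == p)) -
  @g R l (delta_mx p y *+ (q == y) - delta_mx y q *+ (y == p)).
Proof. by rewrite gB adB !br. Qed.

Ltac neqs := repeat match goal with
 | H : is_true (?x != ?y) |- context [?x == ?y] => rewrite (negbTE H)
 | H : is_true (?x != ?y) |- context [?y == ?x] => rewrite (eq_sym y x) (negbTE H)
 end.
Ltac bsimp := rewrite ?brD ?br; rewrite ?eqxx; neqs;
  rewrite ?mulr0n ?mulr1n ?subr0 ?sub0r ?g0 ?gN ?mulr0 ?mul0r ?addr0 ?add0r ?mulNr ?mulrN.


Section Minors.
Variables (R : realType) (l : nat).
Local Notation C := R[i].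
Local Notation n := l.+1.
Local Notation Q := (Q R l).
Local Notation g := (@g R l).
Local Notation Eg a b := (g (delta_mx a b)).
Local Notation sc := (@sc R l).

Definition Mq (a b c d : 'I_n) : Q := Eg a c * Eg b d - Eg a d * Eg b c.

Lemma repl1 (a b c d p : 'I_n) : p != a -> c != p -> a != b -> d != p ->
  ad (Eg p a) (Mq a b c d) = Mq p b c d.
Proof. by move=> *; rewrite /Mq adB !adM; bsimp. Qed.

Lemma swap14 (a b c d : 'I_n) : a != b -> a != c -> a != d -> b != c -> b != d -> c != d ->
  ad (Eg d a) (ad (Eg d a) (Mq a b c d)) = - Mq d b c a - Mq d b c a.
Proof.
move=> *; rewrite /Mq adB !adM; bsimp.
rewrite ?adB ?adD ?adN !adM; bsimp.
set A := Eg d c * Eg b a; set B := Eg d a * Eg b c.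
rewrite mulrDl !mulNr opprD !opprK !opprB -/B addrACA (addrC B).
done.
Qed.

Lemma Zform (a b c d : 'I_n) : a != b -> a != c -> a != d -> b != c -> b != d -> c != d ->
  ad (Eg c a) (ad (Eg d b) (Mq a b c d)) =
  g (delta_mx c c - delta_mx a a) * g (delta_mx d d - delta_mx b b) +
  ((Eg c b * Eg b c - Eg a b * Eg b a) - (Eg c d * Eg d c - Eg a d * Eg d a)).
Proof.
move=> *; rewrite /Mq adB !adM; bsimp.
rewrite ?adB ?adD ?adN !adM; bsimp.
by rewrite mulr0 subr0 opprD opprK.
Qed.


Definition Q4 (a b c d : 'I_n) := Rq (Mq a b c d).
Definition dist (a b c d : 'I_n) := [&& a != b, a != c, a != d, b != c, b != d & c != d].

Ltac dsplit := repeat match goal with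
  | H : is_true (dist _ _ _ _) |- _ => rewrite /dist in H
  | H : is_true (_ && _) |- _ => case/andP: H => ? ? end.
Ltac dsolve := dsplit; rewrite /dist; repeat (apply/andP; split);
  first [assumption | rewrite eq_sym; assumption].

Lemma comm0 (x y : Q) : ad x y = 0 -> y * x = x * y.
Proof. by rewrite adE => /eqP; rewrite subr_eq0 => /eqP. Qed.

Lemma Q4_12 a b c d : dist a b c d -> Q4 a b c d -> Q4 b a c d.
Proof.
move=> hd; dsplit; rewrite /Q4 => h.
have e : Mq b a c d = - Mq a b c d.
  rewrite /Mq (@comm0 (Eg a d) (Eg b c)); last by bsimp.
  rewrite (@comm0 (Eg a c) (Eg b d)); last by bsimp.
  by rewrite opprB.
by rewrite e; apply: Rq_opp.
Qed.

Lemma Q4_34 a b c d : Q4 a b c d -> Q4 a b d c.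
Proof.
rewrite /Q4 => h; have -> : Mq a b d c = - Mq a b c d by rewrite /Mq opprB.
exact: Rq_opp.
Qed.

Lemma Q4_14 a b c d : dist a b c d -> Q4 a b c d -> Q4 d b c a.
Proof.
move=> hd; dsplit; rewrite /Q4 => h.
have -> : Mq d b c a = sc (- ((2 : C)^-1)) * ad (Eg d a) (ad (Eg d a) (Mq a b c d)).
  rewrite swap14 // -scN1 -mulrDl -scD mulrA -scM.
  have -> : - ((2 : C)^-1) * (-1 + -1) = 1 by field.
  by rewrite sc1 mul1r.
by apply: Rq_sc; apply: Rq_ad; apply: Rq_ad.
Qed.

Lemma Q4_r1 a b c d p : dist a b c d -> p != a -> p != b -> p != c -> p != d ->
  Q4 a b c d -> Q4 p b c d.
Proof.
move=> hd ? ? ? ?; dsplit; rewrite /Q4 => h.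
rewrite -(@repl1 a b c d p) //; try by rewrite eq_sym.
exact: Rq_ad.
Qed.

Lemma Q4_13 a b c d : dist a b c d -> Q4 a b c d -> Q4 c b a d.
Proof. move=> hd h; apply: Q4_34; apply: (@Q4_14 a b d c); [dsolve|exact: Q4_34]. Qed.
Lemma Q4_23 a b c d : dist a b c d -> Q4 a b c d -> Q4 a c b d.
Proof.
move=> hd h; apply: (@Q4_12 c a b d); first dsolve.
apply: (@Q4_13 b a c d); first dsolve. by apply: Q4_12.
Qed.
Lemma Q4_24 a b c d : dist a b c d -> Q4 a b c d -> Q4 a d c b.
Proof.
move=> hd h; apply: (@Q4_12 d a c b); first dsolve.
apply: (@Q4_14 b a c d); first dsolve. by apply: Q4_12.
Qed.
Lemma Q4_r2 a b c d p : dist a b c d -> p != a -> p != b -> p != c -> p != d ->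
  Q4 a b c d -> Q4 a p c d.
Proof.
move=> hd ? ? ? ? h; apply: (@Q4_12 p a c d); first dsolve.
apply: (@Q4_r1 b a c d) => //; first dsolve. by apply: Q4_12.
Qed.
Lemma Q4_r3 a b c d p : dist a b c d -> p != a -> p != b -> p != c -> p != d ->
  Q4 a b c d -> Q4 a b p d.
Proof.
move=> hd ? ? ? ? h; apply: (@Q4_13 p b a d); first dsolve.
apply: (@Q4_r1 c b a d) => //; first dsolve. by apply: Q4_13.
Qed.
Lemma Q4_r4 a b c d p : dist a b c d -> p != a -> p != b -> p != c -> p != d ->
  Q4 a b c d -> Q4 a b c p.
Proof.
move=> hd ? ? ? ? h; apply: (@Q4_14 p b c a); first dsolve.
apply: (@Q4_r1 d b c a) => //; first dsolve. by apply: Q4_14.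
Qed.

Lemma fix1 s1 s2 s3 s4 t : dist s1 s2 s3 s4 -> Q4 s1 s2 s3 s4 ->
  exists w2 w3 w4, dist t w2 w3 w4 /\ Q4 t w2 w3 w4.
Proof.
move=> hd h.
have [e1|n1] := eqVneq t s1; first by subst; exists s2, s3, s4.
have [e2|n2] := eqVneq t s2; first by subst; exists s1, s3, s4; split; [dsolve|apply: Q4_12].
have [e3|n3] := eqVneq t s3; first by subst; exists s2, s1, s4; split; [dsolve|apply: Q4_13].
have [e4|n4] := eqVneq t s4; first by subst; exists s2, s3, s1; split; [dsolve|apply: Q4_14].
by exists s2, s3, s4; split; [dsolve|apply: (@Q4_r1 s1)].
Qed.

Lemma fix2 t1 s2 s3 s4 t : dist t1 s2 s3 s4 -> t != t1 -> Q4 t1 s2 s3 s4 ->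
  exists w3 w4, dist t1 t w3 w4 /\ Q4 t1 t w3 w4.
Proof.
move=> hd n1 h.
have [e2|n2] := eqVneq t s2; first by subst; exists s3, s4.
have [e3|n3] := eqVneq t s3; first by subst; exists s2, s4; split; [dsolve|apply: Q4_23].
have [e4|n4] := eqVneq t s4; first by subst; exists s3, s2; split; [dsolve|apply: Q4_24].
by exists s3, s4; split; [dsolve|apply: (@Q4_r2 t1 s2)].
Qed.

Lemma fix3 t1 t2 s3 s4 t : dist t1 t2 s3 s4 -> t != t1 -> t != t2 -> Q4 t1 t2 s3 s4 ->
  exists w4, dist t1 t2 t w4 /\ Q4 t1 t2 t w4.
Proof.
move=> hd n1 n2 h.
have [e3|n3] := eqVneq t s3; first by subst; exists s4.
have [e4|n4] := eqVneq t s4; first by subst; exists s3; split; [dsolve|apply: Q4_34].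
by exists s4; split; [dsolve|apply: (@Q4_r3 t1 t2 s3)].
Qed.

Lemma fix4 t1 t2 t3 s4 t : dist t1 t2 t3 s4 -> dist t1 t2 t3 t -> Q4 t1 t2 t3 s4 ->
  Q4 t1 t2 t3 t.
Proof.
move=> hd ht h.
have [e4|n4] := eqVneq t s4; first by subst.
by dsplit; apply: (@Q4_r4 t1 t2 t3 s4) => //; dsolve.
Qed.

Lemma dist_ne a b c d : dist a b c d -> [/\ b != a, c != a & c != b].
Proof. by move=> h; dsplit; split; rewrite eq_sym. Qed.

Lemma reach s1 s2 s3 s4 t1 t2 t3 t4 : dist s1 s2 s3 s4 -> dist t1 t2 t3 t4 ->
  Q4 s1 s2 s3 s4 -> Q4 t1 t2 t3 t4.
Proof.
move=> hs ht h.
have [w2 [w3 [w4 [d1 h1]]]] := fix1 t1 hs h.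
have [n21 n31 n32] := dist_ne ht.
have [x3 [x4 [d2 h2]]] := @fix2 t1 w2 w3 w4 t2 d1 n21 h1.
have [y4 [d3 h3]] := @fix3 t1 t2 x3 x4 t3 d2 n31 n32 h2.
exact: fix4 d3 ht h3.
Qed.

End Minors.

Section Final.
Variables (R : realType) (l : nat).
Local Notation C := R[i].
Local Notation n := l.+1.
Local Notation U := (uterm R l).
Local Notation Q := (Q R l).
Local Notation g := (@g R l).
Local Notation Eg a b := (g (delta_mx a b)).
Local Notation sc := (@sc R l).
Local Notation Mq := (@Mq R l).
Local Notation Q4 := (@Q4 R l).

Definition o (k : nat) : 'I_n := inord k.-1.

Lemma oK k : (1 <= k <= n)%N -> nat_of_ord (o k) = k.-1.
Proof. move=> h; rewrite /o inordK //; lia. Qed.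

Lemma o_neq i j : (1 <= i <= n)%N -> (1 <= j <= n)%N -> i != j -> o i != o j.
Proof.
move=> hi hj hij; apply/eqP => /(congr1 val) /=; rewrite !oK //.
move: hij => /eqP; lia.
Qed.

Lemma o_lt i j : (1 <= i <= n)%N -> (1 <= j <= n)%N -> (i < j)%N -> (o i < o j)%N.
Proof. move=> hi hj hij; rewrite !oK //; lia. Qed.

Lemma tr_delta (a b : 'I_n) : \tr (delta_mx a b : 'M[C]_n) = (a == b)%:R.
Proof.
rewrite /mxtrace (bigD1 a) //= big1 ?addr0 ?mxE ?eqxx //.
by move=> k /negbTE hk; rewrite mxE hk.
Qed.

Lemma cls_h i : cls (uh R l i) = g (Emx R l i i - Emx R l i.+1 i.+1).
Proof.
rewrite /uh cls_gen /h_cartan insubdK //.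
by rewrite unfold_in /Emx raddfB /= !tr_delta !eqxx subrr.
Qed.

Lemma cls_e i j : i != j -> (1 <= i <= n)%N -> (1 <= j <= n)%N ->
  cls (ue R l i j) = sc ((-1) ^+ (j - i - 1)) * g (Emx R l i j).
Proof.
move=> hij hi hj; rewrite /ue cls_gen /e_root insubdK ?gZ //.
by rewrite unfold_in mxtraceZ /Emx tr_delta (negbTE (o_neq hi hj hij)) mulr0.
Qed.

Lemma scMM a b (x y : Q) : sc a * x * (sc b * y) = sc (a * b) * (x * y).
Proof. by rewrite scM -!mulrA; congr (_ * _); rewrite !mulrA (scC b x). Qed.

Lemma EmxE i j : Emx R l i j = delta_mx (o i) (o j).
Proof. by []. Qed.

Lemma clsv : cls (v_l1 R l) =
  cls (ue R l 1 n) * cls (ue R l 2 l) - cls (ue R l 2 n) * cls (ue R l 1 l).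
Proof. by rewrite /v_l1 clsB !clsM. Qed.

Lemma start : (3 <= l)%N -> Q4 (o 1) (o 2) (o n) (o l).
Proof.
move=> hl.
have e : cls (v_l1 R l) = sc ((-1) ^+ ((l - 1) + (l - 3))) * Mq (o 1) (o 2) (o n) (o l).
  rewrite clsv.
  apply: (@eq_trans _ _ ((sc ((-1) ^+ (n - 1 - 1)) * g (Emx R l 1 n)) *
     (sc ((-1) ^+ (l - 2 - 1)) * g (Emx R l 2 l)) -
     (sc ((-1) ^+ (n - 2 - 1)) * g (Emx R l 2 n)) *
     (sc ((-1) ^+ (l - 1 - 1)) * g (Emx R l 1 l)))).
    by congr (_ * _ - _ * _); apply: cls_e; lia.
  rewrite !scMM -!exprD.
  have -> : (n - 1 - 1 + (l - 2 - 1) = l - 1 + (l - 3))%N by lia.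
  have -> : (n - 2 - 1 + (l - 1 - 1) = l - 1 + (l - 3))%N by lia.
  rewrite -mulrBr /Mq !EmxE; congr (_ * (_ - _)).
  have h1 : o 1 != o l by apply: o_neq; lia.
  have h2 : o 2 != o n by apply: o_neq; lia.
  have h3 : o 1 != o 2 by apply: o_neq; lia.
  have h4 : o l != o n by apply: o_neq; lia.
  have h5 : o 2 != o l by apply: o_neq; lia.
  have h6 : o 1 != o n by apply: o_neq; lia.
  by apply: comm0; bsimp.
have hs : sc ((-1) ^+ (l - 1 + (l - 3)))^-1 * cls (v_l1 R l) = Mq (o 1) (o 2) (o n) (o l).
  by rewrite e mulrA -scM mulVf ?signr_eq0 // sc1 mul1r.
rewrite /Q4 -hs; apply: Rq_sc; exact: Rq_v.
Qed.

Lemma Z_wt (a b c d : 'I_n) (H : sl R l) : in_cartan H ->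
  ad (cls (Ugen H)) (ad (Eg c a) (ad (Eg d b) (Mq a b c d))) = 0.
Proof.
move=> hH; set w := fun k : 'I_n => val H k k.
have hM : ad (cls (Ugen H)) (Mq a b c d) = sc ((w a - w c) + (w b - w d)) * Mq a b c d.
  apply: wt_sub; first by apply: wt_mul; apply: wtE.
  apply: (wt_eq _ (wt_mul (wtE _ _ hH) (wtE _ _ hH))); rewrite /w; ring.
have h2 := wt_ad (wtE d b hH) hM.
have h3 := wt_ad (wtE c a hH) h2.
rewrite (wt_eq (b := 0) _ h3) ?sc0 ?mul0r //.
rewrite /w; ring.
Qed.

Definition eqI (x y : Q) := Iq (x - y).

Lemma Iq0 : (1 <= l)%N -> Iq (0 : Q).
Proof.
move=> hl; rewrite -(mul0r (Eg (o 1) (o 2))); apply: Iq_E; apply: o_lt; lia.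
Qed.
Lemma eqI_eq x y : (1 <= l)%N -> x = y -> eqI x y.
Proof. by move=> hl ->; rewrite /eqI subrr; apply: Iq0. Qed.
Lemma eqI_trans x y z : eqI x y -> eqI y z -> eqI x z.
Proof. by rewrite /eqI -(telesc x y z) => h1 h2; apply: Iq_add. Qed.
Lemma eqI_add x x' y y' : eqI x x' -> eqI y y' -> eqI (x + y) (x' + y').
Proof. by rewrite /eqI opprD addrACA => h1 h2; apply: Iq_add. Qed.
Lemma eqI_opp x x' : eqI x x' -> eqI (- x) (- x').
Proof. by rewrite /eqI -opprD => h; apply: Iq_opp. Qed.
Lemma eqI_sub x x' y y' : eqI x x' -> eqI y y' -> eqI (x - y) (x' - y').
Proof. by move=> h1 h2; apply: eqI_add => //; apply: eqI_opp. Qed.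
Lemma eqI_Iq x : Iq x -> eqI x 0.
Proof. by rewrite /eqI subr0. Qed.

Lemma adBl (x1 x2 y : Q) : ad (x1 - x2) y = ad x1 y - ad x2 y.
Proof.
rewrite !adE mulrBl mulrBr.
set A := x1 * y; set B := x2 * y; set C' := y * x1; set D := y * x2.
by rewrite !opprB addrACA [RHS]addrACA (addrC (- B)).
Qed.

Lemma brdd (x z : 'I_n) : ad (Eg x x) (Eg z z) = 0.
Proof.
rewrite br; case: (eqVneq x z) => [->|ne]; first by rewrite subrr g0.
by rewrite !mulr0n subrr g0.
Qed.

Lemma Dcomm (x y z w : 'I_n) :
  g (delta_mx z z - delta_mx w w) * g (delta_mx x x - delta_mx y y) =
  g (delta_mx x x - delta_mx y y) * g (delta_mx z z - delta_mx w w).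
Proof.
apply: comm0; rewrite !gB adBl !adB !brdd; by rewrite !subrr.
Qed.

Lemma P0_of (p : U) (z : Q) : Rq z -> (forall H, in_cartan H -> ad (cls (Ugen H)) z = 0) ->
  eqI z (cls p) -> in_P0 p.
Proof.
case=> u [hu <-] hz [w [hw cw]]; exists u; split => //.
  move=> H hH; apply/clsP; by rewrite /uad clsB !clsM cls0 -(hz H hH) adE.
apply: un_eq hw _; apply/clsP; by rewrite cw clsB.
Qed.

Lemma targetA i j : (3 <= l)%N -> (1 <= i <= l - 2)%N -> (i + 2 <= j <= l)%N ->
  in_P0 (p_ij R l i j).
Proof.
move=> hl hi hj.
set a := o j.+1; set b := o i.+1; set c := o j; set d := o i.
have hab : a != b by apply: o_neq; lia.
have hac : a != c by apply: o_neq; lia.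
have had : a != d by apply: o_neq; lia.
have hbc : b != c by apply: o_neq; lia.
have hbd : b != d by apply: o_neq; lia.
have hcd : c != d by apply: o_neq; lia.
have hQ : Q4 a b c d.
  apply: (reach _ _ (start hl)); last by rewrite /dist hab hac had hbc hbd hcd.
  rewrite /dist !o_neq //; lia.
apply: (@P0_of _ (ad (Eg c a) (ad (Eg d b) (Mq a b c d)))).
- by apply: Rq_ad; apply: Rq_ad.
- by move=> H hH; apply: Z_wt.
rewrite Zform // /p_ij clsM !cls_h !EmxE -/a -/b -/c -/d.
rewrite -[X in eqI _ X]addr0 Dcomm; apply: eqI_add; first by apply: eqI_eq => //; lia.
apply: eqI_Iq; apply: Iq_sub; apply: Iq_sub; apply: Iq_E; apply: o_lt; lia.
Qed.

Lemma targetB i : (3 <= l)%N -> (2 <= i <= l - 1)%N -> in_P0 (q_i R l i).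
Proof.
move=> hl hi.
set a := o i.+2; set b := o i.+1; set c := o i.-1; set d := o i.
have hab : a != b by apply: o_neq; lia.
have hac : a != c by apply: o_neq; lia.
have had : a != d by apply: o_neq; lia.
have hbc : b != c by apply: o_neq; lia.
have hbd : b != d by apply: o_neq; lia.
have hcd : c != d by apply: o_neq; lia.
have hQ : Q4 a b c d.
  apply: (reach _ _ (start hl)); last by rewrite /dist hab hac had hbc hbd hcd.
  rewrite /dist !o_neq //; lia.
apply: (@P0_of _ (ad (Eg c a) (ad (Eg d b) (Mq a b c d)))).
- by apply: Rq_ad; apply: Rq_ad.
- by move=> H hH; apply: Z_wt.
rewrite Zform //.
have T1 : eqI (Eg c b * Eg b c) (g (delta_mx c c - delta_mx b b)).
  have -> : Eg c b * Eg b c = Eg b c * Eg c b + ad (Eg c b) (Eg b c) by rewrite adE addrC subrK.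
  rewrite /eqI; bsimp; rewrite addrK; apply: Iq_E; apply: o_lt; lia.
have T3 : eqI (Eg c d * Eg d c) (g (delta_mx c c - delta_mx d d)).
  have -> : Eg c d * Eg d c = Eg d c * Eg c d + ad (Eg c d) (Eg d c) by rewrite adE addrC subrK.
  rewrite /eqI; bsimp; rewrite addrK; apply: Iq_E; apply: o_lt; lia.
have T2 : eqI (Eg a b * Eg b a) 0 by apply: eqI_Iq; apply: Iq_E; apply: o_lt; lia.
have T4 : eqI (Eg a d * Eg d a) 0 by apply: eqI_Iq; apply: Iq_E; apply: o_lt; lia.
have hl1 : (1 <= l)%N by lia.
apply: eqI_trans (eqI_add (eqI_eq hl1 (erefl _)) (eqI_sub (eqI_sub T1 T2) (eqI_sub T3 T4))) _.
apply: eqI_eq; first lia.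
rewrite /q_i !clsM !clsD !cls_h cls1 !EmxE prednK; last lia.
rewrite -/a -/b -/c -/d.
rewrite (subr0 (g (delta_mx c c - delta_mx b b))) (subr0 (g (delta_mx c c - delta_mx d d))).
rewrite -gB -(gD (delta_mx c c - delta_mx d d)) -gD.
have -> : delta_mx c c - delta_mx d d + (delta_mx d d - delta_mx b b) +
    (delta_mx b b - delta_mx a a) = delta_mx c c - delta_mx a a :> 'M[C]_n.
  by rewrite !telesc.
have -> : delta_mx c c - delta_mx b b - (delta_mx c c - delta_mx d d) =
    delta_mx d d - delta_mx b b :> 'M[C]_n.
  by rewrite opprB addrC telesc.
by rewrite mulrDr mulr1 Dcomm.
Qed.

Theorem main (hl : (3 <= l)%N) :
  (forall i j : nat, (1 <= i <= l - 2)%N -> (i + 2 <= j <= l)%N ->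
     in_P0 (p_ij R l i j)) /\
  (forall i : nat, (2 <= i <= l - 1)%N -> in_P0 (q_i R l i)).
Proof.
split; [move=> i j hi hj; exact: targetA | move=> i hi; exact: targetB].
Qed.

End Final.

Unset Implicit Arguments.
Local Close Scope ring_scope.

Theorem lemma5p3 (R : realType) (l : nat) (hl : (3 <= l)%N) :
  (forall i j : nat, (1 <= i <= l - 2)%N -> (i + 2 <= j <= l)%N ->
     in_P0 (p_ij R l i j)) /\
  (forall i : nat, (2 <= i <= l - 1)%N -> in_P0 (q_i R l i)).
Proof. exact: (@main R l hl). Qed.
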